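(* Let $p\ne2$ be a rational prime and let $\mathbf{f}\in H_{1,2,2}$ be primitive to $p$ with $N(\mathbf{f})\equiv0\pmod p$. Then there exists $\widehat{\mathbf{f}}\in H_{1,2,2}$ with $\widehat{\mathbf{f}}-\mathbf{f}\in pH_{1,2,2}$, $N(\widehat{\mathbf{f}})\equiv0\pmod p$ and $N(\widehat{\mathbf{f}})\not\equiv0\pmod{p^2}$.
   Context: Let $\mathbf{i},\mathbf{j},\mathbf{k}$ be the standard quaternion units; $\overline{\mathbf{q}}$ is quaternion conjugation and $N(\mathbf{q})=\mathbf{q}\overline{\mathbf{q}}$. $H_{1,2,2}$ is the subring of the quaternions equal to the $\mathbb{Z}$-module generated by $\mathbf{v}_1=1$, $\mathbf{v}_2=\mathbf{i}$, $\mathbf{v}_3=\tfrac12(1+\mathbf{i}+\sqrt2\,\mathbf{j})$, $\mathbf{v}_4=\tfrac12(1+\mathbf{i}+\sqrt2\,\mathbf{k})$. An element $g_1\mathbf{v}_1+g_2\mathbf{v}_2+g_3\mathbf{v}_3+g_4\mathbf{v}_4$ ($g_i\in\mathbb{Z}$) is primitive to $p$ if $\gcd(g_1,g_2,g_3,g_4,p)=1$. *)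

(* Defs.v *)
From HB Require Import structures.
From mathcomp Require Import all_boot all_order all_algebra.
Set Implicit Arguments. Unset Strict Implicit. Unset Printing Implicit Defensive.
Import Order.TTheory GRing.Theory Num.Theory.
Local Open Scope ring_scope.

Record quat (R : rcfType) := Quat { qr : R; qi : R; qj : R; qk : R }.

Section Quat.
Variable R : rcfType.
Implicit Types x y : quat R.

Definition qadd x y := Quat (qr x + qr y) (qi x + qi y) (qj x + qj y) (qk x + qk y).
Definition qopp x := Quat (- qr x) (- qi x) (- qj x) (- qk x).
Definition qsub x y := qadd x (qopp y).
Definition qmul x y :=
  Quat (qr x * qr y - qi x * qi y - qj x * qj y - qk x * qk y)
       (qr x * qi y + qi x * qr y + qj x * qk y - qk x * qj y)
       (qr x * qj y - qi x * qk y + qj x * qr y + qk x * qi y)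
       (qr x * qk y + qi x * qj y - qj x * qi y + qk x * qr y).
Definition qconj x := Quat (qr x) (- qi x) (- qj x) (- qk x).
Definition qnorm x := qmul x (qconj x).
Definition qint (z : int) : quat R := Quat (z%:~R) 0 0 0.
Definition qzscale (z : int) x := qmul (qint z) x.

Definition v1 : quat R := Quat 1 0 0 0.
Definition v2 : quat R := Quat 0 1 0 0.
Definition v3 : quat R := Quat (1/2) (1/2) (Num.sqrt 2 / 2) 0.
Definition v4 : quat R := Quat (1/2) (1/2) 0 (Num.sqrt 2 / 2).

Definition H122_elt (g1 g2 g3 g4 : int) : quat R :=
  qadd (qadd (qzscale g1 v1) (qzscale g2 v2)) (qadd (qzscale g3 v3) (qzscale g4 v4)).

Definition in_H122 x := exists g1 g2 g3 g4 : int, x = H122_elt g1 g2 g3 g4.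

Definition primitive_H122 (p : nat) x :=
  exists g1 g2 g3 g4 : int, x = H122_elt g1 g2 g3 g4 /\
    gcdz (gcdz (gcdz (gcdz g1 g2) g3) g4) (p%:Z) = 1.

Definition norm_cong0 (m : int) x := exists n : int, qnorm x = qint n /\ (m %| n)%Z.
End Quat.

(* Main.v *)
Require Import Defs.
From HB Require Import structures.
From mathcomp Require Import all_boot all_order all_algebra.
Import Order.TTheory GRing.Theory Num.Theory.
Local Open Scope ring_scope.
From mathcomp Require Import ring lra zify.
Definition Qf (g1 g2 g3 g4 : int) : int :=
  g1^+2 + g2^+2 + (g1+g2)*(g3+g4) + g3^+2 + g3*g4 + g4^+2.

Lemma stepL (p Q d c : int) : p != 0 -> (p^+2 %| Q)%Z ->
  (p^+2 %| Q + p*d + p^+2*c)%Z -> (p %| d)%Z.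
Proof.
move=> p0 h1 h2.
have : (p * p %| (Q + p*d + p^+2*c) - Q - p^+2 * c)%Z.
  by rewrite -expr2; apply: rpredB; [apply: rpredB => // | apply: dvdz_mulr].
have -> : Q + p*d + p^+2*c - Q - p^+2 * c = p * d by ring.
by rewrite dvdz_mul2l.
Qed.

Lemma half (p : nat) (g : int) : prime p -> p != 2%N -> (p%:Z %| 2 * g)%Z -> (p%:Z %| g)%Z.
Proof.
move=> pp p2 h.
rewrite Gauss_dvdzr // in h.
rewrite /coprimez /gcdz /=. idtac.
have := prime_gt1 pp => p1.
rewrite (_ : (1 + 1)%N = 2%N) // eqz_nat -/(coprime p 2) prime_coprime //.
apply/negP => /(dvdn_leq (isT : (0 < 2)%N)) h2.
have : p = 2%N by lia.
by move/eqP; rewrite (negbTE p2).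
Qed.

Lemma intmain (p : nat) (g1 g2 g3 g4 : int) : prime p -> p != 2%N ->
  gcdz (gcdz (gcdz (gcdz g1 g2) g3) g4) (p%:Z) = 1 ->
  (p%:Z %| Qf g1 g2 g3 g4)%Z ->
  exists t1 t2 t3 t4 : int,
    let n := Qf (g1 + p%:Z * t1) (g2 + p%:Z * t2) (g3 + p%:Z * t3) (g4 + p%:Z * t4) in
    (p%:Z %| n)%Z /\ ~~ ((p%:Z ^+ 2) %| n)%Z.
Proof.
move=> pp p2 hg hQ.
set P := p%:Z.
have P0 : P != 0 by rewrite /P eqz_nat; have := prime_gt0 pp; lia.
have gen : forall t1 t2 t3 t4,
  Qf (g1 + P * t1) (g2 + P * t2) (g3 + P * t3) (g4 + P * t4) =
  Qf g1 g2 g3 g4 + P * ((2*g1+g3+g4)*t1 + (2*g2+g3+g4)*t2 + (g1+g2+2*g3+g4)*t3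
     + (g1+g2+g3+2*g4)*t4) + P^+2 * Qf t1 t2 t3 t4.
  by move=> *; rewrite /Qf; ring.
have dv : forall t1 t2 t3 t4, (P %| Qf (g1 + P * t1) (g2 + P * t2) (g3 + P * t3) (g4 + P * t4))%Z.
  move=> *; rewrite gen; apply: rpredD; [apply: rpredD => //; exact: dvdz_mulr|].
  by rewrite expr2 -mulrA; apply: dvdz_mulr.
case: (boolP ((P ^+ 2) %| Qf g1 g2 g3 g4)%Z) => h0; last first.
  exists 0, 0, 0, 0; rewrite /= !mulr0 !addr0; split => //.
case: (boolP ((P ^+ 2) %| Qf (g1 + P * 1) (g2 + P * 0) (g3 + P * 0) (g4 + P * 0))%Z) => h1; last by exists 1, 0, 0, 0.
case: (boolP ((P ^+ 2) %| Qf (g1 + P * 0) (g2 + P * 1) (g3 + P * 0) (g4 + P * 0))%Z) => h2; last by exists 0, 1, 0, 0.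
case: (boolP ((P ^+ 2) %| Qf (g1 + P * 0) (g2 + P * 0) (g3 + P * 1) (g4 + P * 0))%Z) => h3; last by exists 0, 0, 1, 0.
case: (boolP ((P ^+ 2) %| Qf (g1 + P * 0) (g2 + P * 0) (g3 + P * 0) (g4 + P * 1))%Z) => h4; last by exists 0, 0, 0, 1.
exfalso.
rewrite gen in h1; rewrite gen in h2; rewrite gen in h3; rewrite gen in h4.
have d1 := stepL _ _ _ _ P0 h0 h1. have d2 := stepL _ _ _ _ P0 h0 h2.
have d3 := stepL _ _ _ _ P0 h0 h3. have d4 := stepL _ _ _ _ P0 h0 h4.
move: d1 d2 d3 d4; rewrite !mulr0 !mulr1 !addr0 !add0r => d1 d2 d3 d4.
have e1 : (P %| 2 * g1)%Z.
  have -> : 2 * g1 = 2 * (2 * g1 + g3 + g4) + (2 * g2 + g3 + g4) - (g1 + g2 + 2 * g3 + g4) - (g1 + g2 + g3 + 2 * g4) by ring.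
  by repeat first [assumption | apply: rpredD | apply: rpredB | apply: dvdz_mull | rewrite rpredN].
have e2 : (P %| 2 * g2)%Z.
  have -> : 2 * g2 = (2 * g1 + g3 + g4) + 2 * (2 * g2 + g3 + g4) - (g1 + g2 + 2 * g3 + g4) - (g1 + g2 + g3 + 2 * g4) by ring.
  by repeat first [assumption | apply: rpredD | apply: rpredB | apply: dvdz_mull | rewrite rpredN].
have e3 : (P %| 2 * g3)%Z.
  have -> : 2 * g3 = - (2 * g1 + g3 + g4) - (2 * g2 + g3 + g4) + 2 * (g1 + g2 + 2 * g3 + g4) by ring.
  by repeat first [assumption | apply: rpredD | apply: rpredB | apply: dvdz_mull | rewrite rpredN].
have e4 : (P %| 2 * g4)%Z.
  have -> : 2 * g4 = - (2 * g1 + g3 + g4) - (2 * g2 + g3 + g4) + 2 * (g1 + g2 + g3 + 2 * g4) by ring.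
  by repeat first [assumption | apply: rpredD | apply: rpredB | apply: dvdz_mull | rewrite rpredN].
have := half _ _ pp p2 e1; have := half _ _ pp p2 e2; have := half _ _ pp p2 e3; have := half _ _ pp p2 e4.
move=> f4 f3 f2 f1.
have : (P %| gcdz (gcdz (gcdz (gcdz g1 g2) g3) g4) P)%Z by rewrite !dvdz_gcd f1 f2 f3 f4 dvdzz.
rewrite hg /dvdz => /= h; have : (p %| 1)%N := h. rewrite dvdn1 => /eqP p1.
by move: pp; rewrite p1.
Qed.
Lemma norm_elt (R : rcfType) g1 g2 g3 g4 :
  qnorm (H122_elt R g1 g2 g3 g4) = qint R (Qf g1 g2 g3 g4).
Proof.
have hs : Num.sqrt (2:R) * Num.sqrt 2 = 2.
  by rewrite -expr2 sqr_sqrtr // ler0n.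
rewrite /qnorm /qmul /H122_elt /qadd /qzscale /qint /qconj /qmul /Qf /v1 /v2 /v3 /v4 /=.
set s := Num.sqrt (2:R) in hs *.
congr Quat.
- apply/eqP; rewrite -subr_eq0; apply/eqP.
  match goal with |- ?E = 0 => have -> : E = (s*s - 2) * ((g3%:~R)^+2 + (g4%:~R)^+2)/4 by field end.
  by rewrite hs subrr !mul0r.
- ring.
- ring.
- ring.
Qed.

Theorem lemma39 (R : rcfType) (p : nat) (f : quat R) :
  prime p -> p != 2%N ->
  primitive_H122 p f -> norm_cong0 (p%:Z) f ->
  exists fh : quat R,
    in_H122 fh /\
    (exists h : quat R, in_H122 h /\ qsub fh f = qzscale (p%:Z) h) /\
    exists n : int, qnorm fh = qint R n /\ (p%:Z %| n)%Z /\ ~~ ((p%:Z ^+ 2) %| n)%Z.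
Proof.
move=> pp p2 [g1 [g2 [g3 [g4 [-> hg]]]]] [n [hn dn]].
have eQ : n = Qf g1 g2 g3 g4.
  move: hn; rewrite norm_elt => /(congr1 (@qr R)) /= /eqP.
  by rewrite eqr_int => /eqP.
rewrite eQ in dn.
have [t1 [t2 [t3 [t4 /= [h1 h2]]]]] := intmain _ _ _ _ _ pp p2 hg dn.
exists (H122_elt R (g1 + p%:Z * t1) (g2 + p%:Z * t2) (g3 + p%:Z * t3) (g4 + p%:Z * t4)).
split; first by rewrite /in_H122; exists (g1 + p%:Z * t1), (g2 + p%:Z * t2), (g3 + p%:Z * t3), (g4 + p%:Z * t4).
split.
  exists (H122_elt R t1 t2 t3 t4); split; first by rewrite /in_H122; exists t1, t2, t3, t4.
  rewrite /qsub /qopp /H122_elt /qadd /qzscale /qint /qmul /v1 /v2 /v3 /v4 /=.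
  (congr Quat; ring).
exists (Qf (g1 + p%:Z * t1) (g2 + p%:Z * t2) (g3 + p%:Z * t3) (g4 + p%:Z * t4)).
rewrite norm_elt; split; [reflexivity | split; [exact: h1 | exact: h2]].
Qed.
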